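(* If $\dim({\cal H})<\infty$, then $\mathrm{Sig}(T)=0$ for every $J$-unitary $T$ on ${\cal K}$ (all of which are then essentially ${\mathbb S}^1$-gapped and ${\mathbb S}^1$-Fredholm).
   Context: ${\cal H}$ is a complex Hilbert space, ${\cal K}={\cal H}\oplus{\cal H}$, $J=\begin{pmatrix}{\bf 1}&0\\0&-{\bf 1}\end{pmatrix}$. A bounded invertible $T$ is $J$-unitary if $T^*JT=J$; it is essentially ${\mathbb S}^1$-gapped if it has only discrete spectrum (isolated eigenvalues of finite algebraic multiplicity) on the unit circle, and ${\mathbb S}^1$-Fredholm if $T-z{\bf 1}$ is Fredholm for all $|z|=1$. For essentially ${\mathbb S}^1$-gapped $T$, choose $h>0$ such that the closed annulus $\{e^{-h}\le|z|\le e^h\}$ contains only discrete spectrum of $T$ and none on its boundary; let ${\cal E}_=$ be the span of the generalized eigenspaces of the eigenvalues of $T$ in this annulus, $\Phi_=$ an isometry onto ${\cal E}_=$, and $\mathrm{Sig}(T)=\nu_+-\nu_-$ where $\nu_\pm$ are the numbers of positive/negative eigenvalues of $\Phi_=^*J\Phi_=$. *)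

(* Defs.v *)
From HB Require Import structures.
From mathcomp Require Import all_boot all_order all_algebra.
From mathcomp Require Export complex.
From mathcomp Require Export reals.
From mathcomp Require Export sequences exp.
Set Implicit Arguments.
Unset Strict Implicit.
Unset Printing Implicit Defensive.
Import Order.TTheory GRing.Theory Num.Theory.
Local Open Scope ring_scope.

(* Finite-dimensional setting: H = C^n, K = H (+) H = C^(n+n),
   matrices act on column vectors 'cV_(n+n). *)

Definition adjmx (R : realType) m p (A : 'M[R[i]]_(m, p)) : 'M[R[i]]_(p, m) :=
  map_mx Num.conj A^T.

Definition Jmx (R : realType) (n : nat) : 'M[R[i]]_(n + n) :=
  block_mx 1%:M 0 0 (- 1%:M).

Definition J_unitary (R : realType) (n : nat) (T : 'M[R[i]]_(n + n)) : Prop :=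
  T \in unitmx /\ adjmx T *m Jmx R n *m T = Jmx R n.

Definition in_spectrum (R : realType) m (T : 'M[R[i]]_m) (z : R[i]) : Prop :=
  ~ (T - z%:M \in unitmx).

Definition gen_eigvec (R : realType) m (T : 'M[R[i]]_m) (z : R[i])
  (v : 'cV[R[i]]_m) : Prop :=
  exists k : nat, (T - z%:M) ^+ k *m v = 0.

Definition alg_mult (R : realType) m (T : 'M[R[i]]_m) (z : R[i]) : nat :=
  mup z (char_poly T).

Definition ess_S1_gapped (R : realType) m (T : 'M[R[i]]_m) : Prop :=
  forall z : R[i], `|z| = 1 -> in_spectrum T z ->
    (exists eps : R, 0 < eps /\
       forall w : R[i], 0 < `|w - z| < eps%:C%C -> ~ in_spectrum T w)
    /\ (0 < alg_mult T z)%N.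

Definition in_annulus (R : realType) (h : R) (z : R[i]) : Prop :=
  (expR (- h))%:C%C <= `|z| /\ `|z| <= (expR h)%:C%C.

Definition admissible_h (R : realType) m (T : 'M[R[i]]_m) (h : R) : Prop :=
  0 < h /\
  (forall z : R[i], in_annulus h z -> in_spectrum T z ->
     (exists eps : R, 0 < eps /\
        forall w : R[i], 0 < `|w - z| < eps%:C%C -> ~ in_spectrum T w)
     /\ (0 < alg_mult T z)%N) /\
  (forall z : R[i], in_spectrum T z ->
     `|z| <> (expR h)%:C%C /\ `|z| <> (expR (- h))%:C%C).

Definition E_eq (R : realType) m (T : 'M[R[i]]_m) (h : R)
  (v : 'cV[R[i]]_m) : Prop :=
  exists (s : seq (R[i] * 'cV[R[i]]_m)),
    (forall p, p \in s -> in_annulus h p.1 /\ in_spectrum T p.1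
                          /\ gen_eigvec T p.1 p.2)
    /\ v = \sum_(p <- s) p.2.

Definition isometry_onto_E (R : realType) m d (T : 'M[R[i]]_m) (h : R)
  (Phi : 'M[R[i]]_(m, d)) : Prop :=
  adjmx Phi *m Phi = 1%:M /\
  (forall v : 'cV[R[i]]_m, E_eq T h v <-> exists w : 'cV[R[i]]_d, v = Phi *m w).

(* nu_+ - nu_- for a (Hermitian) matrix M, given the list rs of its
   eigenvalues counted with algebraic multiplicity (char_poly M splits as
   prod (X - r)). *)
Definition eig_list (R : realType) d (M : 'M[R[i]]_d) (rs : seq R[i]) : Prop :=
  char_poly M = \prod_(r <- rs) ('X - r%:P).

Definition signature_of (R : realType) (rs : seq R[i]) : int :=
  (count (fun r : R[i] => 0 < r) rs)%:Z - (count (fun r : R[i] => r < 0) rs)%:Z.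

(* Main.v *)
Require Import Defs.
From HB Require Import structures.
From mathcomp Require Import all_boot all_order all_algebra.
From mathcomp Require Import complex reals sequences exp.
From mathcomp Require Import lra zify.
Import Order.TTheory GRing.Theory Num.Theory.
Local Open Scope ring_scope.
Set Implicit Arguments.
Unset Strict Implicit.

Section Adj.
Variable R : realType.
Local Notation C := R[i].

Lemma adjmxM m p q (A : 'M[C]_(m, p)) (B : 'M[C]_(p, q)) :
  adjmx (A *m B) = adjmx B *m adjmx A.
Proof. by rewrite /adjmx trmx_mul map_mxM. Qed.

Lemma adjmxD m p (A B : 'M[C]_(m, p)) : adjmx (A + B) = adjmx A + adjmx B.
Proof. by rewrite /adjmx linearD /= map_mxD. Qed.

Lemma adjmxN m p (A : 'M[C]_(m, p)) : adjmx (- A) = - adjmx A.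
Proof. by rewrite /adjmx linearN /= map_mxN. Qed.

Lemma adjmx0 m p : adjmx (0 : 'M[C]_(m, p)) = 0.
Proof. by rewrite /adjmx trmx0 map_mx0. Qed.

Lemma adjmxZ m p (a : C) (A : 'M[C]_(m, p)) :
  adjmx (a *: A) = Num.conj a *: adjmx A.
Proof. by apply/matrixP=> i j; rewrite !mxE rmorphM. Qed.

Lemma adjmxK m p (A : 'M[C]_(m, p)) : adjmx (adjmx A) = A.
Proof. by apply/matrixP=> i j; rewrite !mxE conjCK. Qed.

Lemma adjmx1 m : adjmx (1%:M : 'M[C]_m) = 1%:M.
Proof. by rewrite /adjmx trmx1 map_mx1. Qed.

Lemma adjmx_sum m p (I : Type) (s : seq I) (P : pred I) (F : I -> 'M[C]_(m, p)) :
  adjmx (\sum_(i <- s | P i) F i) = \sum_(i <- s | P i) adjmx (F i).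
Proof.
elim/big_rec2: _ => [|i x y _ <-]; first by rewrite adjmx0.
by rewrite adjmxD.
Qed.

Lemma adjJ n : adjmx (Jmx R n) = Jmx R n.
Proof.
rewrite /Jmx /adjmx tr_block_mx map_block_mx !trmx0 !map_mx0 trmx1 linearN /=.
by rewrite map_mxN trmx1 map_mx1.
Qed.

Lemma JJ n : Jmx R n *m Jmx R n = 1%:M.
Proof.
rewrite /Jmx mulmx_block !mulmx0 !mul0mx !addr0 !add0r mulmx1 mulmxN mulmx1 opprK.
by rewrite -scalar_mx_block.
Qed.

Lemma adj_self_eq0 m (x : 'cV[C]_m) : adjmx x *m x = 0 -> x = 0.
Proof.
move=> /matrixP /(_ 0 0); rewrite !mxE => H.
have H2 : forall i, true -> 0 <= (adjmx x 0 i * x i 0).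
  by move=> i _; rewrite !mxE mulrC -normCK exprn_ge0.
have := (psumr_eq0P H2 H) => H3.
apply/matrixP=> i j; rewrite ord1 mxE; have := H3 i isT.
rewrite !mxE mulrC -normCK => /eqP; by rewrite sqrf_eq0 normr_eq0 => /eqP.
Qed.

End Adj.

Section Orth.
Variable R : realType.
Local Notation C := R[i].

Lemma powS_mul m (A : 'M[C]_m) k (x : 'cV[C]_m) :
  A ^+ k.+1 *m x = A ^+ k *m (A *m x).
Proof. by rewrite exprSr -mulmxE mulmxA. Qed.

Lemma pow0_mul m (A : 'M[C]_m) (x : 'cV[C]_m) : A ^+ 0 *m x = x.
Proof. by rewrite expr0 mul1mx. Qed.

Lemma gen_orth m (G T : 'M[C]_m) (HT : adjmx T *m G *m T = G) (la mu : C) :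
  Num.conj mu * la != 1 ->
  forall k (x : 'cV[C]_m), (T - la%:M) ^+ k *m x = 0 ->
  forall l (y : 'cV[C]_m), (T - mu%:M) ^+ l *m y = 0 ->
  adjmx y *m G *m x = 0.
Proof.
move=> Hne; elim=> [|k IHk] x Hx.
  by move: Hx; rewrite pow0_mul => ->; move=> *; rewrite mulmx0.
elim=> [|l IHl] y Hy.
  by move: Hy; rewrite pow0_mul => ->; rewrite adjmx0 !mul0mx.
have Hy0 := Hy.
rewrite powS_mul in Hx; rewrite powS_mul in Hy.
set x1 := (T - la%:M) *m x in Hx; set y1 := (T - mu%:M) *m y in Hy.
have E1 := IHk x1 Hx l.+1 y Hy0.
have E2 := IHk x1 Hx l y1 Hy.
have E3 := IHl y1 Hy.
have Tx : T *m x = la *: x + x1.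
  by rewrite /x1 mulmxBl mul_scalar_mx addrC subrK.
have Ty : T *m y = mu *: y + y1.
  by rewrite /y1 mulmxBl mul_scalar_mx addrC subrK.
have key : adjmx y *m G *m x = (Num.conj mu * la) *: (adjmx y *m G *m x).
  rewrite -{1}HT.
  have -> : adjmx y *m (adjmx T *m G *m T) *m x = adjmx (T *m y) *m G *m (T *m x) by rewrite adjmxM !mulmxA.
  rewrite Tx Ty adjmxD adjmxZ.
  rewrite !mulmxDl !mulmxDr -!scalemxAl -!scalemxAr.
  move: E1 E2 E3; rewrite !mulmxA => -> -> ->.
  by rewrite !scaler0 !addr0 scalerA.
have : (1 - Num.conj mu * la) *: (adjmx y *m G *m x) = 0.
  by rewrite scalerBl scale1r {1}key subrr.
move/eqP; rewrite scaler_eq0 subr_eq0 eq_sym (negbTE Hne) /=.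
by move/eqP.
Qed.

End Orth.

Section EP.
Variable R : realType.
Local Notation C := R[i].

Lemma in_spectrumE m (T : 'M[C]_m) z :
  in_spectrum T z <-> root (char_poly T) z.
Proof.
rewrite -eigenvalue_root_char /in_spectrum /eigenvalue /eigenspace kermx_eq0.
by rewrite row_free_unit; split => [/negP|/negP].
Qed.

Definition EP m (T : 'M[C]_m) (P : C -> bool) (x : 'cV[C]_m) : Prop :=
  exists s : seq (C * 'cV[C]_m),
    (forall p, p \in s -> [/\ P p.1, in_spectrum T p.1 & gen_eigvec T p.1 p.2])
    /\ x = \sum_(p <- s) p.2.

Variables (m : nat) (T : 'M[C]_m).

Lemma EP0 P : EP T P 0.
Proof. by exists [::]; split => //; rewrite big_nil. Qed.

Lemma EPD P x y : EP T P x -> EP T P y -> EP T P (x + y).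
Proof.
move=> [s1 [H1 ->]] [s2 [H2 ->]]; exists (s1 ++ s2); split.
  by move=> p; rewrite mem_cat => /orP[/H1|/H2].
by rewrite big_cat.
Qed.

Lemma EPZ P a x : EP T P x -> EP T P (a *: x).
Proof.
move=> [s [H ->]]; exists [seq (p.1, a *: p.2) | p <- s]; split.
  move=> p /mapP [q qs ->] /=; have [H1 H2 [k Hk]] := H q qs.
  by split => //; exists k; rewrite -scalemxAr Hk scaler0.
by rewrite big_map scaler_sumr.
Qed.

Lemma EP_sum P (I : finType) (F : I -> 'cV[C]_m) :
  (forall i, EP T P (F i)) -> EP T P (\sum_i F i).
Proof.
move=> H; apply: (big_ind (EP T P)); [exact: EP0 | exact: EPD | by move=> i _].
Qed.

Lemma EP_orth (G : 'M[C]_m) (HT : adjmx T *m G *m T = G) (P1 P2 : C -> bool) x y :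
  (forall a b, P1 a -> P2 b -> Num.conj b * a != 1) ->
  EP T P1 x -> EP T P2 y -> adjmx y *m G *m x = 0.
Proof.
move=> Hab [s1 [H1 ->]] [s2 [H2 ->]].
rewrite adjmx_sum mulmx_suml mulmx_suml big_seq big1 // => q qs.
rewrite mulmx_sumr big_seq big1 // => p ps.
have [Pp _ [k Hk]] := H1 p ps; have [Pq _ [l Hl]] := H2 q qs.
exact: (gen_orth HT (Hab _ _ Pp Pq) Hk Hl).
Qed.

End EP.

Section Span.
Variable R : realType.
Local Notation C := R[i].
Variables (m' : nat) (T : 'M[C]_m'.+1).

Lemma hX a : T - a%:M = horner_mx T ('X - a%:P).
Proof. by rewrite rmorphB /= horner_mx_X horner_mx_C. Qed.

Lemma hcomm p q : horner_mx T p *m horner_mx T q = horner_mx T q *m horner_mx T p.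
Proof. by have := comm_horner_mx2 T p q; rewrite /GRing.comm -!mulmxE. Qed.

Lemma solve_gen (r mu : C) k (g : 'cV[C]_m'.+1) : mu != r ->
  (T - mu%:M) ^+ k *m g = 0 ->
  exists h, (T - mu%:M) ^+ k *m h = 0 /\ (T - r%:M) *m h = g.
Proof.
move=> Hne Hg.
have cop : coprimep (('X - mu%:P) ^+ k) ('X - r%:P).
  by rewrite coprimep_XsubC rootE horner_exp hornerXsubC expf_neq0 // subr_eq0 eq_sym.
have [[u1 u2] /= Hu] := Bezout_eq1_coprimepP _ _ cop.
have Hu' := congr1 (horner_mx T) Hu; rewrite rmorphD !rmorphM rmorph1 /= in Hu'.
rewrite hX -rmorphXn /= in Hg.
exists (horner_mx T u2 *m g); split.
  by rewrite hX -rmorphXn /= mulmxA hcomm -mulmxA Hg mulmx0.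
rewrite hX mulmxA hcomm.
have -> : horner_mx T u2 *m horner_mx T ('X - r%:P) =
          1%:M - horner_mx T u1 *m horner_mx T (('X - mu%:P) ^+ k).
  by rewrite idmxE -Hu' -!mulmxE addrAC subrr add0r.
by rewrite mulmxBl mul1mx -mulmxA Hg mulmx0 subr0.
Qed.

Lemma gen_pow_mul (r : C) k l (x : 'cV[C]_m'.+1) :
  (T - r%:M) ^+ k *m x = 0 -> (T - r%:M) ^+ (l + k) *m x = 0.
Proof. by move=> H; rewrite exprD -mulmxE -mulmxA H mulmx0. Qed.

Lemma gen_add (r : C) (x y : 'cV[C]_m'.+1) :
  gen_eigvec T r x -> gen_eigvec T r y -> gen_eigvec T r (x + y).
Proof.
move=> [k Hk] [l Hl]; exists (l + k)%N; rewrite mulmxDr (gen_pow_mul l Hk) (addnC l k).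
by rewrite (gen_pow_mul k Hl) addr0.
Qed.

Lemma span_step (r : C) (L : seq (C * 'cV[C]_m'.+1)) :
  (forall p, p \in L -> in_spectrum T p.1 /\ gen_eigvec T p.1 p.2) ->
  exists (L' : seq (C * 'cV[C]_m'.+1)) g,
    (forall p, p \in L' -> in_spectrum T p.1 /\ gen_eigvec T p.1 p.2) /\
    gen_eigvec T r g /\
    \sum_(p <- L) p.2 = (T - r%:M) *m (\sum_(p <- L') p.2) + g.
Proof.
elim: L => [|p L IH] HL.
  exists [::], 0; split => //; split; first by exists 0%N; rewrite mulmx0.
  by rewrite !big_nil mulmx0 addr0.
have [|L' [g [H1 [H2 H3]]]] := IH.
  by move=> q qL; apply: HL; rewrite in_cons qL orbT.
have [Hp1 Hp2] := HL p (mem_head _ _).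
rewrite big_cons H3.
have [/eqP Er|Ner] := boolP (p.1 == r).
  exists L', (p.2 + g); split => //; split; first by apply: gen_add => //; rewrite -Er.
  by rewrite addrCA addrA.
have [k Hk] := Hp2.
have [h [Hh1 Hh2]] := solve_gen Ner Hk.
exists ((p.1, h) :: L'), g; split.
  move=> q; rewrite in_cons => /orP [/eqP -> /=|/H1] //; split => //.
  by exists k.
split => //; by rewrite big_cons /= mulmxDr Hh2 addrA.
Qed.

Lemma span_poly (s : seq C) : (forall r, r \in s -> in_spectrum T r) ->
  forall x : 'cV[C]_m'.+1,
  horner_mx T (\prod_(r <- s) ('X - r%:P)) *m x = 0 -> EP T predT x.
Proof.
elim: s => [|r s IH] Hs x Hx.
  by move: Hx; rewrite big_nil rmorph1 mul1mx => ->; apply: EP0.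
move: Hx; rewrite big_cons rmorphM /= -mulmxE hcomm -mulmxA => Hx.
have [L [HL EL]] : EP T predT ((T - r%:M) *m x).
  by rewrite hX; apply: IH Hx => q qs; apply: Hs; rewrite in_cons qs orbT.
have [|L' [g [H1 [[K HK] H3]]]] := span_step r (L := [seq (p.1, p.2) | p <- L]).
  by move=> p /mapP [q qL ->] /=; have [] := HL q qL.
rewrite big_map -EL in H3.
exists ((r, x - \sum_(p <- L') p.2) :: L'); split; last first.
  by rewrite big_cons /= subrK.
move=> p; rewrite in_cons => /orP [/eqP -> /=|/H1 [? ?]] //.
split => //; first by apply: Hs; exact: mem_head.
by exists K.+1; rewrite powS_mul mulmxBr H3 addrAC subrr add0r.
Qed.

End Span.

Lemma spanning (R : realType) m (T : 'M[R[i]]_m) (x : 'cV[R[i]]_m) : EP T predT x.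
Proof.
case: m T x => [|m'] T x.
  have -> : x = 0 by apply/matrixP => i; case: i.
  exact: EP0.
have [rs Hrs] := closed_field_poly_normal (char_poly T).
rewrite (monicP (char_poly_monic T)) scale1r in Hrs.
apply: (@span_poly _ _ T rs).
  by move=> r rrs; apply/in_spectrumE; rewrite Hrs root_prod_XsubC.
by rewrite -Hrs Cayley_Hamilton mul0mx.
Qed.

Section Gap.
Variable R : realType.
Local Notation C := R[i].

Definition nz (z : C) : R := Num.sqrt ((@complex.Re R z)^+2 + (@complex.Im R z)^+2).

Lemma nzE (z : C) : `|z| = (nz z)%:C%C.
Proof. by rewrite normc_def. Qed.

Definition epsl (z : C) (rs : seq C) : R :=
  \big[Order.min/1]_(r <- rs | r != z) nz (r - z).

Lemma epsl_gt0 z rs : 0 < epsl z rs.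
Proof.
rewrite /epsl; elim: rs => [|r rs IH]; first by rewrite big_nil ltr01.
rewrite big_cons; case: ifP => // Hr.
rewrite lt_min IH andbT -(@ltcR R) -nzE normr_gt0 subr_eq0.
exact: Hr.
Qed.

Lemma epsl_le z rs r : r \in rs -> r != z -> epsl z rs <= nz (r - z).
Proof.
rewrite /epsl; elim: rs => [//|r' rs IH]; rewrite in_cons big_cons => /orP [/eqP <-|Hr] Hz.
  by rewrite Hz ge_min lexx.
case: ifP => _; last exact: IH.
by rewrite ge_min IH ?orbT.
Qed.

Lemma gapped m (T : 'M[C]_m) z : in_spectrum T z ->
  (exists eps : R, 0 < eps /\
       forall w : C, 0 < `|w - z| < eps%:C%C -> ~ in_spectrum T w)
    /\ (0 < alg_mult T z)%N.
Proof.
move=> /in_spectrumE Hz.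
have [rs Hrs] := closed_field_poly_normal (char_poly T).
rewrite (monicP (char_poly_monic T)) scale1r in Hrs.
split.
  exists (epsl z rs); split; first exact: epsl_gt0.
  move=> w /andP [H1 H2] /in_spectrumE; rewrite Hrs root_prod_XsubC => Hw.
  have Hwz : w != z by apply: contraTneq H1 => ->; rewrite subrr normr0 ltxx.
  have := epsl_le Hw Hwz; rewrite -(@lecR R) -nzE => H3.
  by move: (lt_le_trans H2 H3); rewrite ltxx.
by rewrite /alg_mult (mup_geq _ 1 (monic_neq0 (char_poly_monic T))) expr1 dvdp_XsubCl.
Qed.

End Gap.

Section Rank.
Variable R : realType.
Local Notation C := R[i].

Definition fq N (G : 'M[C]_N) (x : 'cV[C]_N) : C := (adjmx x *m G *m x) 0 0.

Lemma fqD N (G : 'M[C]_N) x y :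
  adjmx x *m G *m y = 0 -> adjmx y *m G *m x = 0 ->
  fq G (x + y) = fq G x + fq G y.
Proof.
move=> H1 H2; rewrite /fq adjmxD !mulmxDl !mulmxDr H1 H2 addr0 add0r.
by rewrite mxE.
Qed.

Lemma fq0 N (G : 'M[C]_N) x : adjmx x *m G *m x = 0 -> fq G x = 0.
Proof. by rewrite /fq => ->; rewrite mxE. Qed.

Lemma row_col N k (A : 'M[C]_(k, N)) (u : 'rV[C]_N) :
  (u <= A)%MS -> exists w, u^T = A^T *m w.
Proof. by move/submxP => [D ->]; exists D^T; rewrite trmx_mul. Qed.

Lemma cap0 N k1 k2 (A1 : 'M[C]_(k1, N)) (A2 : 'M[C]_(k2, N)) :
  (forall u : 'rV[C]_N, (u <= A1)%MS -> (u <= A2)%MS -> u = 0) ->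
  (A1 :&: A2)%MS = 0.
Proof.
move=> H; apply/eqP; rewrite -submx0; apply/rV_subP => u.
by rewrite sub_capmx => /andP [H1 H2]; rewrite (H u H1 H2) sub0mx.
Qed.

Lemma rank3 N k1 k2 k3 (G : 'M[C]_N) (B1 : 'M[C]_(N, k1)) (B2 : 'M[C]_(N, k2))
  (B3 : 'M[C]_(N, k3)) :
  (forall w : 'cV[C]_k1, 0 <= fq G (B1 *m w) /\ (fq G (B1 *m w) = 0 -> B1 *m w = 0)) ->
  (forall w : 'cV[C]_k2, adjmx (B2 *m w) *m G *m (B2 *m w) = 0) ->
  (forall (w : 'cV[C]_k1) (w' : 'cV[C]_k2), adjmx (B1 *m w) *m G *m (B2 *m w') = 0 /\
                adjmx (B2 *m w') *m G *m (B1 *m w) = 0) ->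
  (forall w : 'cV[C]_k3, fq G (B3 *m w) <= 0 /\ (fq G (B3 *m w) = 0 -> B3 *m w = 0)) ->
  (\rank B1 + \rank B2 + \rank B3 <= N)%N.
Proof.
move=> H1 H2 H12 H3.
have E12 : (B1^T :&: B2^T)%MS = 0.
  apply: cap0 => u /row_col [w1 Hw1] /row_col [w2 Hw2].
  rewrite !trmxK in Hw1 Hw2.
  have F2 : fq G (B2 *m w2) = 0 by rewrite /fq H2 mxE.
  have [_ Z] := H1 w1.
  have F1 : fq G (B1 *m w1) = 0 by rewrite -Hw1 Hw2 F2.
  by apply: trmx_inj; rewrite trmx0 Hw1 (Z F1).
have E123 : ((B1^T + B2^T) :&: B3^T)%MS = 0.
  apply: cap0 => u /sub_addsmxP [[u1 u2] /= Hu] /row_col [w3 Hw3].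
  rewrite !trmxK in Hw3.
  have Hx : u^T = B1 *m u1^T + B2 *m u2^T.
    by rewrite Hu raddfD /= !trmx_mul !trmxK.
  have [C1 C2] := H12 u1^T u2^T.
  have Fx : fq G u^T = fq G (B1 *m u1^T).
    by rewrite Hx fqD // (fq0 (H2 _)) addr0.
  have [G1 Z1] := H1 u1^T; have [G3 Z3] := H3 w3.
  have F0 : fq G (B1 *m u1^T) = 0.
    by apply/eqP; rewrite eq_le G1 andbT -Fx Hw3 G3.
  have Z : B1 *m u1^T = 0 := Z1 F0.
  have F3 : fq G (B3 *m w3) = 0.
    by rewrite -Hw3 Hx Z add0r (fq0 (H2 _)).
  by apply: trmx_inj; rewrite trmx0 Hw3 Z3.
have := rank_leq_col (B1^T + B2^T + B3^T)%MS.
by rewrite (mxrank_disjoint_sum E123) (mxrank_disjoint_sum E12) !mxrank_tr.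
Qed.

End Rank.

Lemma char_poly_sim (F : fieldType) d (P A : 'M[F]_d) : P \in unitmx ->
  char_poly (invmx P *m A *m P) = char_poly A.
Proof.
move=> Pu; rewrite /char_poly /char_poly_mx.
set mP := map_mx (@polyC F) P; set mQ := map_mx (@polyC F) (invmx P).
have H1 : mQ *m mP = 1%:M by rewrite -map_mxM mulVmx // map_mx1.
have -> : 'X%:M - map_mx polyC (invmx P *m A *m P) =
          mQ *m ('X%:M - map_mx polyC A) *m mP.
  by rewrite !map_mxM mulmxBr mulmxBl scalar_mxC -(mulmxA 'X%:M) H1 mulmx1.
by rewrite !det_mulmx mulrAC -det_mulmx H1 det1 mul1r.
Qed.

Lemma char_poly_diag (F : fieldType) d (E : 'rV[F]_d) :
  char_poly (diag_mx E) = \prod_(i < d) ('X - (E 0 i)%:P).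
Proof.
rewrite char_poly_trig ?diag_mx_is_trig //.
by apply: eq_bigr => i _; rewrite mxE eqxx mulr1n.
Qed.

Section Spec.
Variable R : realType.
Local Notation C := R[i].
Local Open Scope sesquilinear_scope.

Lemma spec d (M : 'M[C]_d) : adjmx M = M ->
  exists (P : 'M[C]_d) (E : 'rV[C]_d),
    [/\ P *m adjmx P = 1%:M, adjmx P *m P = 1%:M,
        M = adjmx P *m diag_mx E *m P & forall i, E 0 i \is Num.real].
Proof.
move=> HM.
have Hh : M \is hermsymmx.
  by apply/is_hermitianmxP; rewrite expr0 scale1r; exact: (esym HM).
have Pu := spectral_unitarymx M.
have PU := spectral_unit M.
have Hn := hermitian_normalmx Hh.
have HD := hermitian_spectral_diag_real Hh.
exists (spectralmx M), (spectral_diag M); split.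
- exact: (unitarymxP Pu).
- by have := mulVmx PU; rewrite invmx_unitary.
- by rewrite -[adjmx _](invmx_unitary Pu); apply/orthomx_spectralP.
- by move=> i; apply: (mxOverP HD).
Qed.

End Spec.

Section Sel.
Variable R : realType.
Local Notation C := R[i].
Variables (d : nat) (A : {pred 'I_d}).

Definition selmx : 'M[C]_(d, #|A|) := \matrix_(i, k) ((i == enum_val k)%:R).

Lemma selmx_adj : adjmx selmx *m selmx = 1%:M.
Proof.
apply/matrixP => k k'; rewrite !mxE (bigD1 (enum_val k)) //= big1.
  rewrite !mxE eqxx rmorph1 mul1r addr0 (inj_eq enum_val_inj).
  by rewrite eq_sym.
move=> i /negPf Hi; rewrite !mxE Hi.
by rewrite rmorph0 mul0r.
Qed.

Lemma selmx_supp (w : 'cV[C]_#|A|) i : (selmx *m w) i 0 != 0 -> i \in A.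
Proof.
apply: contraR => Hi; rewrite !mxE big1 // => k _; rewrite mxE.
have : enum_val k \in A := enum_valP k.
by case: eqP => [<-|]; [rewrite (negbTE Hi) | rewrite mul0r].
Qed.

End Sel.
Arguments selmx {R d} A.

Section Pos.
Variable R : realType.
Local Notation C := R[i].
Variables (N d : nat) (Phi : 'M[C]_(N, d)) (Gm : 'M[C]_N) (P : 'M[C]_d)
  (E : 'rV[C]_d) (A : {pred 'I_d}).
Hypotheses (HPhi : adjmx Phi *m Phi = 1%:M) (HP : P *m adjmx P = 1%:M)
  (HG : adjmx Phi *m Gm *m Phi = adjmx P *m diag_mx E *m P)
  (HA : forall i, i \in A -> 0 < E 0 i).

Definition Bpos := Phi *m adjmx P *m selmx A.

Lemma Bpos_rank : (#|A| <= \rank Bpos)%N.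
Proof.
have H : adjmx (selmx A) *m P *m adjmx Phi *m Bpos = 1%:M.
  rewrite /Bpos !mulmxA -(mulmxA _ (adjmx Phi)) HPhi mulmx1.
  by rewrite -(mulmxA _ P) HP mulmx1 selmx_adj.
by rewrite -{1}(mxrank1 C #|A|) -H mxrankM_maxr.
Qed.

Lemma diag_form (c : 'cV[C]_d) :
  (forall i, c i 0 != 0 -> i \in A) ->
  0 <= (adjmx c *m diag_mx E *m c) 0 0 /\
  ((adjmx c *m diag_mx E *m c) 0 0 = 0 -> c = 0).
Proof.
move=> Hc.
have Ht : forall i, 0 <= adjmx c 0 i * (diag_mx E *m c) i 0 /\
             (adjmx c 0 i * (diag_mx E *m c) i 0 = 0 -> c i 0 = 0).
  move=> i; rewrite mul_diag_mx !mxE.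
  have [/eqP ->|ci] := boolP (c i 0 == 0); first by rewrite !mulr0.
  have Ei := HA (Hc i ci).
  rewrite mulrCA (mulrC (_^*)) -normCK; split; first by apply: mulr_ge0; [exact: ltW | exact: exprn_ge0].
  move/eqP; rewrite mulf_eq0 (gt_eqF Ei) /= sqrf_eq0 normr_eq0 => /eqP H.
  by rewrite H.
have -> : (adjmx c *m diag_mx E *m c) 0 0 =
          \sum_i adjmx c 0 i * (diag_mx E *m c) i 0.
  by rewrite -mulmxA mxE.
split; first by apply: sumr_ge0 => i _; case: (Ht i).
move=> H0; apply/matrixP => i j; rewrite ord1 mxE.
have H' : forall i, true -> 0 <= adjmx c 0 i * (diag_mx E *m c) i 0.
  by move=> k _; case: (Ht k).
have := (psumr_eq0P H' H0) i isT.
by move/(proj2 (Ht i)).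
Qed.

Lemma Bpos_form (w : 'cV[C]_#|A|) :
  0 <= fq Gm (Bpos *m w) /\ (fq Gm (Bpos *m w) = 0 -> Bpos *m w = 0).
Proof.
have E1 : Bpos *m w = Phi *m (adjmx P *m (selmx A *m w)) by rewrite /Bpos !mulmxA.
have Hc : forall i, (selmx A *m w) i 0 != 0 -> i \in A by move=> i; apply: selmx_supp.
rewrite E1; move: (selmx A *m w) Hc => c Hc.
have E2 : fq Gm (Phi *m (adjmx P *m c)) = (adjmx c *m diag_mx E *m c) 0 0.
  rewrite /fq !adjmxM adjmxK.
  have -> : adjmx c *m P *m adjmx Phi *m Gm *m (Phi *m (adjmx P *m c)) =
            adjmx c *m P *m (adjmx Phi *m Gm *m Phi) *m adjmx P *m c.
    by rewrite !mulmxA.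
  rewrite HG !mulmxA -(mulmxA _ P) HP mulmx1.
  by rewrite -(mulmxA _ P (adjmx P)) HP mulmx1.
have [H1 H2] := diag_form Hc.
rewrite E2; split => // /H2 c0.
by rewrite c0 !mulmx0.
Qed.

End Pos.

Section Aux.
Variable R : realType.
Local Notation C := R[i].

Lemma nz_ge0 (z : C) : 0 <= nz z.
Proof. exact: sqrtr_ge0. Qed.

Lemma cond_ne (a b : C) : nz b * nz a != 1 -> Num.conj b * a != 1.
Proof.
apply: contra => /eqP H; apply/eqP.
have : `|Num.conj b * a| = 1 by rewrite H normr1.
rewrite normrM norm_conjC !nzE -rmorphM /= => H2.
by apply: (@complexI R); rewrite H2.
Qed.

Definition pa (h : R) (z : C) := (expR (- h) <= nz z) && (nz z <= expR h).
Definition pg (h : R) (z : C) := expR h < nz z.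
Definition pl (h : R) (z : C) := nz z < expR (- h).

Lemma expRNK (h : R) : expR (- h) * expR h = 1.
Proof. by rewrite -expRD addNr expR0. Qed.

Lemma c_gg h a b : 0 < h -> pg h a -> pg h b -> Num.conj b * a != 1.
Proof.
move=> hp; rewrite /pg => Ha Hb; apply: cond_ne.
have e1 : 1 < expR h by rewrite expR_gt1.
have a1 : 1 < nz a := lt_trans e1 Ha.
have b1 : 1 < nz b := lt_trans e1 Hb.
apply/eqP => E.
have : 1 < nz b * nz a by rewrite -(mulr1 1); apply: ltr_pM => //.
by rewrite E ltxx.
Qed.

Lemma c_ll h a b : 0 < h -> pl h a -> pl h b -> Num.conj b * a != 1.
Proof.
move=> hp; rewrite /pl => Ha Hb; apply: cond_ne.
have e1 : expR (- h) < 1 by rewrite expR_lt1 oppr_lt0.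
have a1 : nz a < 1 := lt_trans Ha e1.
have b1 : nz b < 1 := lt_trans Hb e1.
have := nz_ge0 a; have := nz_ge0 b.
move=> ? ?; apply/eqP => E; nra.
Qed.

Lemma c_ag h a b : pa h a -> pg h b -> Num.conj b * a != 1.
Proof.
rewrite /pa /pg => /andP [Ha _] Hb; apply: cond_ne.
have e1 := expRNK h; have e2 : 0 < expR (- h) := expR_gt0 _.
have := nz_ge0 a; have := nz_ge0 b.
move=> ? ?; apply/eqP => E; nra.
Qed.

Lemma c_ga h a b : pg h a -> pa h b -> Num.conj b * a != 1.
Proof.
rewrite /pa /pg => Ha /andP [Hb _]; apply: cond_ne.
have e1 := expRNK h; have e2 : 0 < expR (- h) := expR_gt0 _.
have := nz_ge0 a; have := nz_ge0 b.
move=> ? ?; apply/eqP => E; nra.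
Qed.

Lemma c_al h a b : pa h a -> pl h b -> Num.conj b * a != 1.
Proof.
rewrite /pa /pl => /andP [_ Ha] Hb; apply: cond_ne.
have e1 := expRNK h; have e2 : 0 < expR h := expR_gt0 _.
have := nz_ge0 a; have := nz_ge0 b.
move=> ? ?; apply/eqP => E; nra.
Qed.

Lemma c_la h a b : pl h a -> pa h b -> Num.conj b * a != 1.
Proof.
rewrite /pa /pl => Ha /andP [_ Hb]; apply: cond_ne.
have e1 := expRNK h; have e2 : 0 < expR h := expR_gt0 _.
have := nz_ge0 a; have := nz_ge0 b.
move=> ? ?; apply/eqP => E; nra.
Qed.

Lemma pa_annulus h z : in_annulus h z <-> pa h z.
Proof.
rewrite /in_annulus /pa !nzE !lecR; split; first by move=> [-> ->].
by move/andP.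
Qed.

Lemma matcols m (f : 'I_m -> 'cV[C]_m) (u : 'cV[C]_m) :
  (\matrix_(i, j) f j i 0) *m u = \sum_j u j 0 *: f j.
Proof.
apply/matrixP => i k; rewrite ord1 !mxE summxE.
by apply: eq_bigr => j _; rewrite !mxE mulrC.
Qed.

Lemma adj_self_ge0 m (x : 'cV[C]_m) : 0 <= (adjmx x *m x) 0 0.
Proof.
rewrite mxE; apply: sumr_ge0 => i _.
by rewrite !mxE mulrC -normCK exprn_ge0.
Qed.

Lemma mx11_eq0 (x : 'M[C]_1) : x 0 0 = 0 -> x = 0.
Proof. by move=> H; apply/matrixP => i j; rewrite !ord1 H mxE. Qed.

Lemma adjmx_col m1 m2 p (A : 'M[C]_(m1, p)) (B : 'M[C]_(m2, p)) :
  adjmx (col_mx A B) = row_mx (adjmx A) (adjmx B).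
Proof. by rewrite /adjmx tr_col_mx map_row_mx. Qed.

Lemma form_neg n (w : 'cV[C]_n) :
  adjmx (col_mx 0 w) *m Jmx R n *m col_mx 0 w = - (adjmx w *m w).
Proof.
rewrite adjmx_col adjmx0 /Jmx mul_row_block !mul0mx !mulmx0 !add0r mulmxN mulmx1.
by rewrite mul_row_col mul0mx add0r mulNmx.
Qed.

Lemma form_pos n (w : 'cV[C]_n) :
  adjmx (col_mx w 0) *m Jmx R n *m col_mx w 0 = adjmx w *m w.
Proof.
rewrite adjmx_col adjmx0 /Jmx mul_row_block !mul0mx !mulmx0 !addr0 mulmx1.
by rewrite mul_row_col mulmx0 addr0.
Qed.

End Aux.

Lemma EP_filter (R : realType) m (T : 'M[R[i]]_m) (Q : pred R[i])
  (L : seq (R[i] * 'cV[R[i]]_m)) :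
  (forall p, p \in L -> in_spectrum T p.1 /\ gen_eigvec T p.1 p.2) ->
  EP T Q (\sum_(p <- L | Q p.1) p.2).
Proof.
move=> HL; exists [seq p <- L | Q p.1]; split; last by rewrite big_filter.
by move=> p; rewrite mem_filter => /andP [Qp /HL [? ?]].
Qed.

Lemma part1 (R : realType) (u v x : R) : (~~ ((u <= x) && (x <= v)) && (v < x)) = (v < x).
Proof. by case: (ltrP v x) => H; rewrite ?andbF // andbT negb_and -ltNge H orbT. Qed.
Lemma part2 (R : realType) (u v x : R) : u <= v -> (~~ ((u <= x) && (x <= v)) && ~~ (v < x)) = (x < u).
Proof.
move=> uv; case: (ltrP v x) => H /=; rewrite ?andbF ?andbT.
  by apply/esym/negbTE; rewrite -leNgt; apply: (le_trans uv); apply: ltW.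
by rewrite ltNge.
Qed.

Unset Implicit Arguments.
Set Strict Implicit.
Theorem proposition5p6 (R : realType) (n : nat) (T : 'M[R[i]]_(n + n)) :
  J_unitary T ->
  ess_S1_gapped T /\
  (forall (h : R) (d : nat) (Phi : 'M[R[i]]_(n + n, d)) (rs : seq R[i]),
     admissible_h T h ->
     isometry_onto_E T h Phi ->
     eig_list (adjmx Phi *m Jmx R n *m Phi) rs ->
     signature_of rs = 0%:Z).
Proof.
move=> [Tu HT]; split.
  by move=> z _ Hz; apply: gapped.
move=> h d Phi rs [hpos _] [HPhi HE] Hrs.
have HJ := adjJ R n.
pose M := adjmx Phi *m Jmx R n *m Phi.
have HM : adjmx M = M by rewrite /M !adjmxM adjmxK HJ !mulmxA.
have [P [E [HP1 HP2 ME HEr]]] := spec HM.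
have := fun j => spanning T (col j (1%:M : 'M[R[i]]_(n + n))).
rewrite /EP => /fin_all_exists [L HL].
have HL1 : forall j p, p \in L j -> in_spectrum T p.1 /\ gen_eigvec T p.1 p.2.
  by move=> j p /(proj1 (HL j)) [].
pose av j := \sum_(p <- L j | pa h p.1) p.2.
pose fv j := \sum_(p <- L j | pg h p.1) p.2.
pose gv j := \sum_(p <- L j | pl h p.1) p.2.
have hle : expR (- h) <= expR h by rewrite ler_expR; lra.
have Hs : forall j, col j 1%:M = av j + fv j + gv j.
  move=> j; rewrite (proj2 (HL j)) (bigID (fun p => pa h p.1)) /= -addrA.
  congr (_ + _).
  rewrite (bigID (fun p => pg h p.1)) /=; congr (_ + _); apply: eq_bigl => p /=.
    by rewrite /pa /pg part1.
  by rewrite /pa /pg /pl part2.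
have HEa : forall x, EP T (pa h) x -> exists w, x = Phi *m w.
  move=> x [s [Hs1 Hs2]]; apply/HE; exists s; split => // p /Hs1 [H1 H2 H3].
  by split => //; apply/pa_annulus.
have HPa : forall w, EP T (pa h) (Phi *m w).
  move=> w; have [s [Hs1 Hs2]] : E_eq T h (Phi *m w) by apply/HE; exists w.
  exists s; split => // p /Hs1 [H1 [H2 H3]]; split => //; exact/pa_annulus.
have := fun j => HEa _ (EP_filter (pa h) (HL1 j)).
move=> /fin_all_exists [wv Hwv].
pose Fg := \matrix_(i, j) fv j i 0.
pose Fl := \matrix_(i, j) gv j i 0.
pose W := \matrix_(i, j) wv j i 0.
have Hwv' : forall j, av j = Phi *m wv j := Hwv.
have PW : Phi *m W = \matrix_(i, j) av j i 0.
  by apply/matrixP => i j; rewrite !mxE Hwv' mxE; apply: eq_bigr => k _; rewrite mxE.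
have Hid : 1%:M = Phi *m W + Fg + Fl.
  apply/matrixP => i j; rewrite PW.
  have := congr1 (fun v : 'cV_(n + n) => v i 0) (Hs j).
  by rewrite !mxE.
have EFg : forall u, EP T (pg h) (Fg *m u).
  move=> u; rewrite /Fg matcols; apply: EP_sum => j; apply: EPZ; exact: EP_filter (HL1 j).
have EFl : forall u, EP T (pl h) (Fl *m u).
  move=> u; rewrite /Fl matcols; apply: EP_sum => j; apply: EPZ; exact: EP_filter (HL1 j).
have O_ag : forall (w : 'cV[R[i]]_d) (u : 'cV[R[i]]_(n + n)), adjmx (Fg *m u) *m Jmx R n *m (Phi *m w) = 0.
  by move=> w u; apply: (EP_orth HT (fun a b => @c_ag R h a b) (HPa w) (EFg u)).
have O_ga : forall (w : 'cV[R[i]]_d) (u : 'cV[R[i]]_(n + n)), adjmx (Phi *m w) *m Jmx R n *m (Fg *m u) = 0.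
  by move=> w u; apply: (EP_orth HT (fun a b => @c_ga R h a b) (EFg u) (HPa w)).
have O_al : forall (w : 'cV[R[i]]_d) (u : 'cV[R[i]]_(n + n)), adjmx (Fl *m u) *m Jmx R n *m (Phi *m w) = 0.
  by move=> w u; apply: (EP_orth HT (fun a b => @c_al R h a b) (HPa w) (EFl u)).
have O_la : forall (w : 'cV[R[i]]_d) (u : 'cV[R[i]]_(n + n)), adjmx (Phi *m w) *m Jmx R n *m (Fl *m u) = 0.
  by move=> w u; apply: (EP_orth HT (fun a b => @c_la R h a b) (EFl u) (HPa w)).
have N_g : forall u : 'cV[R[i]]_(n + n), adjmx (Fg *m u) *m Jmx R n *m (Fg *m u) = 0.
  by move=> u; apply: (EP_orth HT (fun a b => @c_gg R h a b hpos) (EFg u) (EFg u)).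
have N_l : forall u : 'cV[R[i]]_(n + n), adjmx (Fl *m u) *m Jmx R n *m (Fl *m u) = 0.
  by move=> u; apply: (EP_orth HT (fun a b => @c_ll R h a b hpos) (EFl u) (EFl u)).
have Ez : forall v : 'cV[R[i]]_(n + n), v = Phi *m (W *m v) + Fg *m v + Fl *m v.
  by move=> v; rewrite mulmxA -!mulmxDl -Hid mul1mx.
have Munit : M \in unitmx.
  rewrite -row_free_unit -kermx_eq0; apply/eqP; apply/eqP; rewrite -submx0.
  apply/rV_subP => u /sub_kermxP Hu.
  have My : M *m adjmx u = 0 by rewrite -HM -adjmxM Hu adjmx0.
  set y := adjmx u in My; set x := Phi *m y.
  have Ox : forall w : 'cV[R[i]]_d, adjmx (Phi *m w) *m Jmx R n *m x = 0.
    move=> w; rewrite /x adjmxM -!mulmxA (mulmxA (adjmx Phi)) (mulmxA (adjmx Phi *m _)).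
    by rewrite -/M My mulmx0.
  set z := Jmx R n *m x.
  have Z : adjmx z *m Jmx R n *m x = 0.
    by rewrite (Ez z) !adjmxD !mulmxDl Ox /x O_ag O_al !addr0.
  have x0 : x = 0.
    apply: adj_self_eq0; move: Z; rewrite /z adjmxM HJ -(mulmxA (adjmx x)) JJ mulmx1.
    by [].
  have y0 : y = 0 by rewrite -(mul1mx y) -HPhi -mulmxA -/x x0 mulmx0.
  by rewrite -(adjmxK u) -/y y0 adjmx0 sub0mx.
have [_ Pu] := mulmx1_unit HP2.
have iP : invmx P = adjmx P.
  by rewrite -[invmx P]mul1mx -HP2 -mulmxA mulmxV // mulmx1.
have Hprod : char_poly M = \prod_(i < d) ('X - (E 0 i)%:P).
  by rewrite ME -iP char_poly_sim // char_poly_diag.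
have Hperm : perm_eq rs [seq E 0 i | i <- enum 'I_d].
  apply: prod_XsubC_eq; rewrite -Hrs Hprod big_map big_enum /=.
  by apply: eq_bigl => i; rewrite inE.
have Erc : forall i, E 0 i \in rs.
  by move=> i; rewrite (perm_mem Hperm) map_f ?mem_enum.
have E0 : forall i, E 0 i != 0.
  move=> i; apply: contraTneq (Erc i) => ->.
  rewrite -root_prod_XsubC -Hrs; apply/negP => /in_spectrumE.
  rewrite /in_spectrum => H; apply: H.
  have -> : (0%:M : 'M[R[i]]_d) = 0 by apply/matrixP => a b; rewrite !mxE mul0rn.
  by rewrite subr0.
pose Ap := [pred i : 'I_d | 0 < E 0 i].
pose An := [pred i : 'I_d | E 0 i < 0].
have cp : count (fun r : R[i] => 0 < r) rs = #|Ap|.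
  rewrite (permP Hperm) count_map cardE size_filter enumT.
  by apply: eq_count => i.
have cn : count (fun r : R[i] => r < 0) rs = #|An|.
  rewrite (permP Hperm) count_map cardE size_filter enumT.
  by apply: eq_count => i.
have cd : (#|Ap| + #|An|)%N = d.
  rewrite -cardUI (@eq_card0 _ [predI Ap & An]); last first.
    by move=> i; rewrite !inE; apply/negP => /andP [H1 H2]; have := lt_trans H1 H2; rewrite ltxx.
  rewrite addn0; transitivity #|'I_d|; last exact: card_ord.
  apply: eq_card => i; rewrite !inE.
  by have := E0 i; rewrite (real_neqr_lt (HEr i) (real0 _)) orbC.
have HPhiJ : adjmx Phi *m Jmx R n *m Phi = adjmx P *m diag_mx E *m P := ME.
have dN : diag_mx (- E) = - diag_mx E.
  by apply/matrixP => a b; rewrite !mxE mulNrn.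
have HPhiNJ : adjmx Phi *m (- Jmx R n) *m Phi = adjmx P *m diag_mx (- E) *m P.
  by rewrite mulmxN mulNmx HPhiJ dN mulmxN mulNmx.
have HAp : forall i, i \in Ap -> 0 < E 0 i by [].
have HAn : forall i, i \in An -> 0 < (- E) 0 i.
  by move=> i; rewrite !inE mxE oppr_gt0.
have Hrk : (n + n <= d + \rank Fg + \rank Fl)%N.
  have := mxrank1 (R[i]) (n + n); rewrite {1}Hid => E1.
  rewrite -{1}E1; apply: leq_trans (mxrank_add _ _) _; apply: leq_add => //.
  apply: leq_trans (mxrank_add _ _) _; apply: leq_add => //.
  exact: leq_trans (mxrankM_maxl _ _) (rank_leq_col _).
have mxN : forall A : 'M[R[i]]_1, (- A) 0 0 = - A 0 0 by move=> A; rewrite mxE.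
have H3n : forall w : 'cV[R[i]]_n,
    fq (Jmx R n) (col_mx (0 : 'M[R[i]]_n) 1%:M *m w) <= 0 /\
    (fq (Jmx R n) (col_mx (0 : 'M[R[i]]_n) 1%:M *m w) = 0 -> col_mx (0 : 'M[R[i]]_n) 1%:M *m w = 0).
  move=> w; rewrite mul_col_mx mul0mx mul1mx /fq form_neg mxN oppr_le0 adj_self_ge0.
  split => // /eqP; rewrite oppr_eq0 => /eqP /mx11_eq0 /adj_self_eq0 ->.
  by rewrite col_mx0.
have H3p : forall w : 'cV[R[i]]_n,
    fq (- Jmx R n) (col_mx 1%:M (0 : 'M[R[i]]_n) *m w) <= 0 /\
    (fq (- Jmx R n) (col_mx 1%:M (0 : 'M[R[i]]_n) *m w) = 0 -> col_mx 1%:M (0 : 'M[R[i]]_n) *m w = 0).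
  move=> w; rewrite mul_col_mx mul0mx mul1mx /fq mulmxN mulNmx form_pos mxN.
  rewrite oppr_le0 adj_self_ge0.
  split => // /eqP; rewrite oppr_eq0 => /eqP /mx11_eq0 /adj_self_eq0 ->.
  by rewrite col_mx0.
have BE : forall (A : {pred 'I_d}) (w : 'cV[R[i]]_#|A|), Bpos Phi P A *m w = Phi *m (adjmx P *m selmx A *m w).
  by move=> A w; rewrite /Bpos !mulmxA.
have R1 : (\rank (Bpos Phi P Ap) + \rank Fg + \rank (col_mx 0 1%:M : 'M[R[i]]_(n + n, n)) <= n + n)%N.
  apply: rank3.
  - exact: Bpos_form HP1 HPhiJ HAp.
  - exact: N_g.
  - by move=> w w'; rewrite !BE; split; [apply: O_ga | apply: O_ag].
  - exact: H3n.
have R2 : (\rank (Bpos Phi P Ap) + \rank Fl + \rank (col_mx 0 1%:M : 'M[R[i]]_(n + n, n)) <= n + n)%N.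
  apply: rank3.
  - exact: Bpos_form HP1 HPhiJ HAp.
  - exact: N_l.
  - by move=> w w'; rewrite !BE; split; [apply: O_la | apply: O_al].
  - exact: H3n.
have R3 : (\rank (Bpos Phi P An) + \rank Fg + \rank (col_mx 1%:M 0 : 'M[R[i]]_(n + n, n)) <= n + n)%N.
  apply: rank3.
  - exact: Bpos_form HP1 HPhiNJ HAn.
  - by move=> w; rewrite mulmxN mulNmx N_g oppr0.
  - move=> w w'; rewrite !BE !mulmxN !mulNmx.
    by rewrite O_ga O_ag oppr0.
  - exact: H3p.
have R4 : (\rank (Bpos Phi P An) + \rank Fl + \rank (col_mx 1%:M 0 : 'M[R[i]]_(n + n, n)) <= n + n)%N.
  apply: rank3.
  - exact: Bpos_form HP1 HPhiNJ HAn.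
  - by move=> w; rewrite mulmxN mulNmx N_l oppr0.
  - move=> w w'; rewrite !BE !mulmxN !mulNmx.
    by rewrite O_la O_al oppr0.
  - exact: H3p.
have B1 : (#|Ap| <= \rank (Bpos Phi P Ap))%N := Bpos_rank Ap HPhi HP1.
have B2 : (#|An| <= \rank (Bpos Phi P An))%N := Bpos_rank An HPhi HP1.
rewrite rank_col_0mx mxrank1 in R1 R2.
rewrite rank_col_mx0 mxrank1 in R3 R4.
rewrite /signature_of cp cn.
have -> : #|An| = #|Ap| by lia.
by rewrite subrr.
Qed.
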